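(* Let $\psi\in\mathrm{SO}^0(2,1)$. Then there exists $K$ such that, for any $\epsilon>0$, an element $g\in\mathrm{SO}^0(2,1)$ is $\epsilon/K$-hyperbolic whenever $\psi g\psi^{-1}$ is $\epsilon$-hyperbolic.
   Context: $\mathbb{R}^{2,1}$ is $\mathbb{R}^3$ with $\mathbb{B}(u,v)=u_1v_1+u_2v_2-u_3v_3$; $\mathrm{SO}^0(2,1)$ is the identity component of its linear isometry group; $\rho$ is Euclidean distance. $S^1=\{(\cos\phi,\sin\phi,1)\}$. $g\in\mathrm{SO}^0(2,1)$ is hyperbolic if it has real distinct eigenvalues, necessarily $\lambda<1<\lambda^{-1}$; $x^-(g)$, $x^+(g)$ are the eigenvectors on $S^1$ for $\lambda$, $\lambda^{-1}$. $g$ is $\epsilon$-hyperbolic if it is hyperbolic and $\rho(x^+(g),x^-(g))\ge\epsilon$. *)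

(* Defs.v *)
From HB Require Import structures.
From mathcomp Require Import all_boot all_order all_algebra.
From mathcomp Require Import reals.
Set Implicit Arguments. Unset Strict Implicit. Unset Printing Implicit Defensive.
Import Order.TTheory GRing.Theory Num.Theory.
Local Open Scope ring_scope.

(* coordinate indices 1,2,3 of R^3 (0-based ordinals) *)
Definition i0 : 'I_3 := @Ordinal 3 0 isT.
Definition i1 : 'I_3 := @Ordinal 3 1 isT.
Definition i2 : 'I_3 := @Ordinal 3 2 isT.

Definition Jmx (R : realType) : 'M[R]_3 :=
  \matrix_(i < 3, j < 3) (if i == j then (if i == i2 then -1 else 1) else 0).

Definition Bform (R : realType) (u v : 'cV[R]_3) : R :=
  u i0 0 * v i0 0 + u i1 0 * v i1 0 - u i2 0 * v i2 0.

(* SO^0(2,1): linear isometries of B (g^T J g = J) with det 1, in the identity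
   component, i.e. preserving the future light cone (g_33 > 0). *)
Definition SO021 (R : realType) (g : 'M[R]_3) : Prop :=
  g^T *m Jmx R *m g = Jmx R /\ \det g = 1 /\ 0 < g i2 i2.

Definition onS1 (R : realType) (x : 'cV[R]_3) : Prop :=
  x i0 0 ^+ 2 + x i1 0 ^+ 2 = 1 /\ x i2 0 = 1.

Definition rho (R : realType) (x y : 'cV[R]_3) : R :=
  Num.sqrt (\sum_(i < 3) (x i 0 - y i 0) ^+ 2).

Definition hyperbolic (R : realType) (g : 'M[R]_3) : Prop :=
  exists a b c : R, [/\ a != b, b != c, a != c &
    [/\ eigenvalue g a, eigenvalue g b & eigenvalue g c]].

Definition eps_hyperbolic (R : realType) (eps : R) (g : 'M[R]_3) : Prop :=
  hyperbolic g /\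
  exists (lam : R) (xm xp : 'cV[R]_3),
    [/\ 0 < lam, lam < 1, onS1 xm & onS1 xp] /\
    [/\ g *m xm = lam *: xm, g *m xp = lam^-1 *: xp & eps <= rho xp xm].

(* Main.v *)
Require Import Defs.
From HB Require Import structures.
From mathcomp Require Import all_boot all_order all_algebra.
From mathcomp Require Import reals.
From mathcomp Require Import ring lra.
Import Order.TTheory GRing.Theory Num.Theory.
Local Open Scope ring_scope.
Set Implicit Arguments. Unset Strict Implicit.

Lemma Bform_mx (R : realType) (u v : 'cV[R]_3) :
  Bform u v = (u^T *m Jmx R *m v) 0 0.
Proof.
rewrite /Bform !mxE !big_ord_recr big_ord0 /= !mxE.
rewrite !big_ord_recr big_ord0 /= !mxE /=.
have -> : (ord_max : 'I_3) = i2 by apply/val_inj.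
have -> : (widen_ord (leqnSn 2) ord_max : 'I_3) = i1 by apply/val_inj.
have -> : (widen_ord (leqnSn 2) (widen_ord (leqnSn 1) ord_max) : 'I_3) = i0 by apply/val_inj.
rewrite /=.
rewrite !big_ord0; ring.
Qed.

Lemma BformZ (R : realType) (a b : R) (u v : 'cV[R]_3) :
  Bform (a *: u) (b *: v) = a * b * Bform u v.
Proof. rewrite /Bform !mxE; ring. Qed.

Lemma SO_unit (R : realType) (psi : 'M[R]_3) : SO021 psi -> psi \in unitmx.
Proof. by case=> _ [hd _]; rewrite unitmxE hd unitr1. Qed.

Lemma Bpsi (R : realType) (psi : 'M[R]_3) (u v : 'cV[R]_3) :
  SO021 psi -> Bform (psi *m u) (psi *m v) = Bform u v.
Proof.
case=> H _; rewrite !Bform_mx trmx_mul.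
have -> : u^T *m psi^T *m Jmx R *m (psi *m v) = u^T *m (psi^T *m Jmx R *m psi) *m v
  by rewrite !mulmxA.
by rewrite H.
Qed.

Lemma third (R : realType) (psi : 'M[R]_3) (x : 'cV[R]_3) :
  SO021 psi -> x i2 0 = 1 ->
  (invmx psi *m x) i2 0 = psi i2 i2 - psi i0 i2 * x i0 0 - psi i1 i2 * x i1 0.
Proof.
move=> hp hx; have hu := @SO_unit R psi hp.
have h1 : Bform (delta_mx i2 0) (invmx psi *m x) = - (invmx psi *m x) i2 0.
  by rewrite /Bform !mxE /=; ring.
have h2 := @Bpsi R psi (delta_mx i2 0) (invmx psi *m x) hp.
rewrite mulKVmx // -colE h1 in h2.
rewrite -[LHS]opprK -h2 /Bform !mxE hx; ring.
Qed.

Lemma colnorm (R : realType) (psi : 'M[R]_3) :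
  SO021 psi -> psi i0 i2 ^+ 2 + psi i1 i2 ^+ 2 - psi i2 i2 ^+ 2 = -1.
Proof.
move=> hp; have h2 := @Bpsi R psi (delta_mx i2 0) (delta_mx i2 0) hp.
rewrite -colE /Bform !mxE /= in h2.
rewrite !expr2; rewrite h2; ring.
Qed.

Lemma spos (R : realType) (psi : 'M[R]_3) (x : 'cV[R]_3) :
  SO021 psi -> onS1 x ->
  0 < (invmx psi *m x) i2 0 /\ (invmx psi *m x) i2 0 <= 2 * psi i2 i2.
Proof.
move=> hp [hx hx2]; rewrite (@third R psi x hp hx2).
have hc := @colnorm R psi hp.
have [_ [_ h22]] := hp.
move: hc hx h22.
set c0 := psi i0 i2; set c1 := psi i1 i2; set c2 := psi i2 i2.
set x0 := x i0 0; set x1 := x i1 0.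
move=> hc hx h22.
have hcs : (c0 * x0 + c1 * x1) ^+ 2 < c2 ^+ 2.
  have : 0 <= (c0 * x1 - c1 * x0) ^+ 2 by apply: sqr_ge0.
  nra.
split; nra.
Qed.

Lemma rhoS1 (R : realType) (a b : 'cV[R]_3) :
  onS1 a -> onS1 b -> rho a b = Num.sqrt (-2 * Bform a b).
Proof.
move=> [ha ha2] [hb hb2]; rewrite /rho /Bform !big_ord_recr big_ord0 /=.
have -> : (ord_max : 'I_3) = i2 by apply/val_inj.
have -> : (widen_ord (leqnSn 2) ord_max : 'I_3) = i1 by apply/val_inj.
have -> : (widen_ord (leqnSn 2) (widen_ord (leqnSn 1) ord_max) : 'I_3) = i0 by apply/val_inj.
congr Num.sqrt; rewrite ha2 hb2; nra.
Qed.

Lemma normS1 (R : realType) (psi : 'M[R]_3) (x : 'cV[R]_3) :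
  SO021 psi -> onS1 x ->
  onS1 (((invmx psi *m x) i2 0)^-1 *: (invmx psi *m x)).
Proof.
move=> hp hx; have [hs _] := @spos R psi x hp hx.
have hu := @SO_unit R psi hp.
set y := invmx psi *m x in hs *.
have hB : Bform y y = 0.
  have := @Bpsi R psi y y hp; rewrite /y mulKVmx // => <-.
  by case: hx => h1 h2; rewrite /Bform h2; lra.
have hB' := @BformZ R (y i2 0)^-1 (y i2 0)^-1 y y; rewrite hB mulr0 in hB'.
have h3 : ((y i2 0)^-1 *: y) i2 0 = 1 by rewrite mxE mulVf // gt_eqF.
split=> //; move: hB'; rewrite /Bform h3; lra.
Qed.

Lemma eig_conj (R : realType) (psi g : 'M[R]_3) (a : R) :
  psi \in unitmx -> eigenvalue (psi *m g *m invmx psi) a -> eigenvalue g a.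
Proof.
move=> hu /eigenvalueP [v hv vn0]; apply/eigenvalueP; exists (v *m psi).
  have := congr1 (mulmx^~ psi) hv.
  by rewrite -scalemxAl -!mulmxA mulVmx // mulmx1.
apply: contra vn0 => /eqP h0.
by rewrite -[v](mulmxK hu) h0 mul0mx.
Qed.

Lemma eig_vec (R : realType) (psi g : 'M[R]_3) (x : 'cV[R]_3) (c s : R) :
  psi \in unitmx -> (psi *m g *m invmx psi) *m x = c *: x ->
  g *m (s *: (invmx psi *m x)) = c *: (s *: (invmx psi *m x)).
Proof.
move=> hu H.
have E : invmx psi *m (psi *m g *m invmx psi *m x) = g *m (invmx psi *m x)
  by rewrite -!mulmxA mulKmx.
rewrite H -scalemxAr in E.
by rewrite -scalemxAr -E scalerA mulrC -scalerA.
Qed.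

Unset Implicit Arguments.
Theorem mainTheorem16 (R : realType) (psi : 'M[R]_3) :
  SO021 psi ->
  exists K : R, 0 < K /\
    forall (eps : R), 0 < eps ->
    forall g : 'M[R]_3, SO021 g ->
      eps_hyperbolic eps (psi *m g *m invmx psi) ->
      eps_hyperbolic (eps / K) g.
Proof.
move=> hp; have hu := @SO_unit R psi hp.
have h22 : 0 < psi i2 i2 by case: hp => _ [].
exists (2 * psi i2 i2); split; first lra.
move=> eps he g hg [hh [lam [xm [xp [[hl0 hl1 hxm hxp] [hem hep hd]]]]]].
split.
  case: hh => a [b [c [hab hbc hac [ea eb ec]]]].
  by exists a, b, c; split=> //; split; [exact: (eig_conj hu ea)|exact: (eig_conj hu eb)|exact: (eig_conj hu ec)].
have [sm0 smK] := @spos R psi xm hp hxm.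
have [sp0 spK] := @spos R psi xp hp hxp.
have zm1 := @normS1 R psi xm hp hxm.
have zp1 := @normS1 R psi xp hp hxp.
set sm := (invmx psi *m xm) i2 0 in sm0 smK zm1 *.
set sp := (invmx psi *m xp) i2 0 in sp0 spK zp1 *.
exists lam, (sm^-1 *: (invmx psi *m xm)), (sp^-1 *: (invmx psi *m xp)).
split; first by split.
split; [exact: eig_vec | exact: eig_vec |].
set zm := sm^-1 *: _ in zm1 *; set zp := sp^-1 *: _ in zp1 *.
have eB : Bform xp xm = sp * sm * Bform zp zm.
  rewrite -BformZ /zm /zp !scalerA !mulfV ?gt_eqF // !scale1r.
  by rewrite -[RHS](@Bpsi R psi) // !mulKVmx.
rewrite (rhoS1 hxp hxm) eB in hd; rewrite (rhoS1 zp1 zm1).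
set D := -2 * Bform zp zm.
have D0 : 0 <= D.
  case: zp1 zm1 => [h1 h2] [h3 h4]; rewrite /D /Bform h2 h4.
  have := sqr_ge0 (zp i0 0 - zm i0 0); have := sqr_ge0 (zp i1 0 - zm i1 0).
  nra.
have hD : -2 * (sp * sm * Bform zp zm) = sp * sm * D by rewrite /D; ring.
rewrite hD in hd.
rewrite ler_pdivrMr; last lra.
apply: (le_trans hd).
have -> : Num.sqrt D * (2 * psi i2 i2) = Num.sqrt ((2 * psi i2 i2) ^+ 2 * D).
  rewrite (sqrtrM D (sqr_ge0 (2 * psi i2 i2))) sqrtr_sqr ger0_norm; [ring | lra].
rewrite ler_sqrt; last by apply: mulr_ge0 => //; apply: sqr_ge0.
have h1 : 0 <= (2 * psi i2 i2 - sp) * sm * D.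
  by apply: mulr_ge0 => //; apply: mulr_ge0; lra.
have h2 : 0 <= (2 * psi i2 i2) * (2 * psi i2 i2 - sm) * D.
  by apply: mulr_ge0 => //; apply: mulr_ge0; lra.
rewrite expr2; lra.
Qed.
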